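(* Let $\alpha\in\mathbb{R}\setminus\{0\}$, let $\delta^{\star}(\alpha)=1/\alpha^2$ if $\alpha\le 2$ and $\delta^{\star}(\alpha)=\frac{1}{2\alpha}\exp\{1-\frac{\alpha}{2}\}$ if $\alpha>2$, let $|\delta|\le\delta^{\star}(\alpha)$, and let $C(u,v)=uv+\delta(1-e^{\alpha(u-u^2)})(1-e^{\alpha(v-v^2)})$ on $[0,1]^2$. Define Spearman's rho $\rho_C=12\int_0^1\int_0^1C(u,v)\,du\,dv-3$, Gini's gamma $\gamma_C=4\{\int_0^1C(u,1-u)\,du-\int_0^1(u-C(u,u))\,du\}$, Kendall's tau $\tau_C=4\int_0^1\int_0^1 C(u,v)\,dC(u,v)-1$, Blest's measure $\eta_C=24\int_0^1\int_0^1(1-u)C(u,v)\,du\,dv-2$, and Spearman's footrule $\phi_C=6\int_0^1 C(u,u)\,du-2$. Then $$\eta_C=\rho_C=\tfrac{3}{2}\tau_C\quad\text{and}\quad \phi_C=\tfrac{3}{4}\gamma_C.$$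
   Context: $\int\int C\,dC$ denotes the Lebesgue–Stieltjes integral of $C$ with respect to the probability measure with distribution function $C$ (equivalently $\int\int C(u,v)c(u,v)\,du\,dv$ with $c=\partial^2C/\partial u\partial v$). *)

(* Defs.v *)
From Stdlib Require Import Reals.
From Coquelicot Require Import Coquelicot.
Open Scope R_scope.

Definition delta_star (alpha : R) : R :=
  if Rle_dec alpha 2 then 1 / alpha ^ 2
  else (1 / (2 * alpha)) * exp (1 - alpha / 2).

Definition Cfam (alpha delta : R) (u v : R) : R :=
  u * v + delta * (1 - exp (alpha * (u - u ^ 2))) * (1 - exp (alpha * (v - v ^ 2))).

Definition cdens (C : R -> R -> R) (u v : R) : R :=
  Derive (fun x => Derive (fun y => C x y) v) u.

Definition int2 (f : R -> R -> R) : R :=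
  RInt (fun u => RInt (fun v => f u v) 0 1) 0 1.

Definition spearman_rho (C : R -> R -> R) : R := 12 * int2 C - 3.

Definition gini_gamma (C : R -> R -> R) : R :=
  4 * (RInt (fun u => C u (1 - u)) 0 1 - RInt (fun u => u - C u u) 0 1).

Definition kendall_tau (C : R -> R -> R) : R :=
  4 * int2 (fun u v => C u v * cdens C u v) - 1.

Definition blest_eta (C : R -> R -> R) : R :=
  24 * int2 (fun u v => (1 - u) * C u v) - 2.

Definition spearman_footrule (C : R -> R -> R) : R :=
  6 * RInt (fun u => C u u) 0 1 - 2.

(* Main.v *)
Require Import Defs.
From Stdlib Require Import Reals Lra.
From Coquelicot Require Import Coquelicot.
From Stdlib Require Import ssreflect.
Open Scope R_scope.

Lemma lin2 (g h : R->R) a b Ig Ih c d : is_RInt g a b Ig -> is_RInt h a b Ih ->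
  is_RInt (fun x => c * g x + d * h x) a b (c*Ig + d*Ih).
Proof. intros H1 H2.
exact (is_RInt_plus _ _ _ _ _ _ (is_RInt_scal _ _ _ c _ H1) (is_RInt_scal _ _ _ d _ H2)). Qed.

Lemma drint (F g : R -> R) a b : (forall x, is_derive F x (g x)) -> (forall x, continuous g x) ->
  is_RInt g a b (F b - F a).
Proof. intros H1 H2. exact (is_RInt_derive F g a b (fun x _ => H1 x) (fun x _ => H2 x)). Qed.

Lemma exrint (g : R -> R) a b : (forall x, ex_derive g x) -> is_RInt g a b (RInt g a b).
Proof. intros H; apply (@RInt_correct R_CompleteNormedModule), (@ex_RInt_continuous R_CompleteNormedModule); intros; apply (@ex_derive_continuous R_AbsRing R_NormedModule), H. Qed.

Lemma contR (g : R -> R) x : ex_derive g x -> continuous g x.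
Proof. apply (@ex_derive_continuous R_AbsRing R_NormedModule). Qed.

Lemma swapR (g : R -> R) a b l : is_RInt g b a l -> is_RInt g a b (- l).
Proof. intro H. exact (is_RInt_swap g a b l H). Qed.
Lemma complinR (g : R -> R) u v a b l : is_RInt g (u*a+v) (u*b+v) l -> is_RInt (fun y => u * g (u*y+v)) a b l.
Proof. intro H. exact (is_RInt_comp_lin g u v a b l H). Qed.

Lemma uniqR (g : R -> R) a b l : is_RInt g a b l -> RInt g a b = l.
Proof. intro H. exact (is_RInt_unique g a b l H). Qed.
Lemma extR (g h : R -> R) a b : (forall x, g x = h x) -> RInt g a b = RInt h a b.
Proof. intro H. apply (@RInt_ext R_CompleteNormedModule). intros; apply H. Qed.

Ltac fixexp := repeat match goal with
  | |- context[exp (?al * (?x + - (?x * (?x * 1))))] => replace (al * (x + - (x * (x * 1)))) with (al * (x - x^2)) by ring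
  | |- context[exp (?al * (?x - ?x * (?x * 1)))] => replace (al * (x - x * (x * 1))) with (al * (x - x^2)) by ring
  end.

Lemma iextR (g h : R -> R) a b l : (forall x, g x = h x) -> is_RInt g a b l -> is_RInt h a b l.
Proof. intros H1 H2. exact (is_RInt_ext g h a b l (fun x _ => H1 x) H2). Qed.

Section S.
Variables alpha delta : R.
Definition ff u := 1 - exp (alpha * (u - u ^ 2)).
Definition ffd u := - (alpha * (1 - 2 * u) * exp (alpha * (u - u ^ 2))).
Lemma ffD u : is_derive ff u (ffd u).
Proof. unfold ff, ffd. auto_derive; auto. replace (alpha * (u + - (u * (u * 1)))) with (alpha * (u - u^2)) by ring; ring. Qed.
Lemma ffdD u : ex_derive ffd u.
Proof. unfold ffd. auto_derive; auto. Qed.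
Lemma ffE u : ex_derive ff u.
Proof. unfold ff. auto_derive; auto. Qed.
Lemma ffsym u : ff (1 - u) = ff u.
Proof. unfold ff. f_equal. f_equal. f_equal. ring. Qed.
Lemma ff0 : ff 0 = 0. Proof. unfold ff. replace (alpha * (0 - 0^2)) with 0 by ring. rewrite exp_0. ring. Qed.
Lemma ff1 : ff 1 = 0. Proof. unfold ff. replace (alpha * (1 - 1^2)) with 0 by ring. rewrite exp_0. ring. Qed.

Definition I := RInt ff 0 1.
Definition J := RInt (fun u => ff u * ff u) 0 1.
Lemma hI : is_RInt ff 0 1 I.
Proof. apply exrint. apply ffE. Qed.
Lemma hJ : is_RInt (fun u => ff u * ff u) 0 1 J.
Proof. apply exrint. intro x. unfold ff. auto_derive; auto. Qed.
Lemma h1 : is_RInt (fun _ => 1) 0 1 1.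
Proof. replace 1 with ((fun x : R => x) 1 - (fun x : R => x) 0) at 2 by (simpl; ring).
apply (drint (fun x => x)). intros; auto_derive; auto. intros; apply continuous_const. Qed.
Lemma hX : is_RInt (fun u => u) 0 1 (1/2).
Proof. replace (1/2) with ((fun x => x^2/2) 1 - (fun x : R => x^2/2) 0) by (simpl; field).
apply (drint (fun x => x^2/2)). intros; auto_derive; auto; field. intros; apply continuous_id. Qed.
Lemma hX2 : is_RInt (fun u => u*u) 0 1 (1/3).
Proof. replace (1/3) with ((fun x => x^3/3) 1 - (fun x : R => x^3/3) 0) by (simpl; field).
apply (drint (fun x => x^3/3)). intros; auto_derive; auto; field. intros; apply contR; auto_derive; auto. Qed.
Lemma hL : is_RInt (fun u => ff u * ffd u) 0 1 0.
Proof. replace 0 with ((fun x => ff x ^2/2) 1 - (fun x : R => ff x^2/2) 0) at 2 by (simpl; rewrite ff0 ff1; field).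
apply (drint (fun x => ff x ^2/2)). intros. auto_derive. apply ffE. rewrite (is_derive_unique _ _ _ (ffD x)). field.
intros; apply contR. apply ex_derive_mult. apply ffE. apply ffdD. Qed.
Lemma hK : is_RInt (fun u => u * ffd u) 0 1 (- I).
Proof.
  have H : is_RInt (fun u => ff u + u * ffd u) 0 1 0.
  { replace 0 with ((fun x => x * ff x) 1 - (fun x : R => x * ff x) 0) at 2 by (simpl; rewrite ff0 ff1; field).
    apply (drint (fun x => x * ff x)). intros. auto_derive. apply ffE. rewrite (is_derive_unique _ _ _ (ffD x)). ring.
    intros; apply contR. unfold ff, ffd; auto_derive; auto. }
  have H2 := lin2 _ _ _ _ _ _ 1 (-1) H hI.
  replace (-I) with (1*0 + -1 * I) by ring.
  eapply is_RInt_ext; [|exact H2]; simpl. intros; ring.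
Qed.
Lemma hUF : is_RInt (fun u => u * ff u) 0 1 (I/2).
Proof.
  have E : is_RInt (fun u => u * ff u) 0 1 (RInt (fun u => u * ff u) 0 1).
  { apply exrint. intro; apply ex_derive_mult. auto_derive; auto. apply ffE. }
  set M := RInt (fun u => u * ff u) 0 1 in E.
  have H1 : is_RInt (fun u => u * ff u) (-1*0+1) (-1*1+1) (- M).
  { replace (-1*0+1) with 1 by ring. replace (-1*1+1) with 0 by ring. apply swapR. exact E. }
  have H2 := complinR _ _ _ _ _ _ H1.
  have H3 : is_RInt (fun u => (1 - u) * ff u) 0 1 M.
  { have H4 := lin2 _ _ _ _ _ _ (-1) 0 H2 hI.
    replace M with (-1 * (- M) + 0 * I) by ring.
    eapply is_RInt_ext; [|exact H4]; simpl. intros.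
    replace (-1*x+1) with (1-x) by ring. rewrite ffsym. ring. }
  have H5 := lin2 _ _ _ _ _ _ 1 (-1) hI E.
  have H6 : is_RInt (fun u => (1 - u) * ff u) 0 1 (1 * I + -1 * M).
  { eapply is_RInt_ext; [|exact H5]; simpl. intros; ring. }
  have EQ := is_RInt_unique _ _ _ _ H3. rewrite (is_RInt_unique _ _ _ _ H6) in EQ.
  replace (I/2) with M by lra. exact E.
Qed.

Lemma cdensE u v : cdens (Cfam alpha delta) u v = 1 + delta * ffd u * ffd v.
Proof.
  unfold cdens.
  rewrite (Derive_ext (fun x => Derive (fun y => Cfam alpha delta x y) v) (fun x => x + delta * ff x * ffd v)).
  - apply is_derive_unique. have H := ffD u. unfold ff, ffd in *. auto_derive; auto; fixexp; try ring.
  - intro x. apply is_derive_unique. unfold Cfam.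
    unfold ff, ffd in *. auto_derive; auto; fixexp; try ring.
Qed.

Lemma int2C : int2 (Cfam alpha delta) = 1/4 + delta*I*I.
Proof.
  unfold int2. rewrite (extR _ (fun u => u * (1/2) + (delta * I) * ff u)).
  - apply uniqR. have H := lin2 _ _ _ _ _ _ (1/2) (delta * I) hX hI.
    replace (1/4 + delta*I*I) with (1/2*(1/2) + delta*I*I) by field.
    eapply iextR; [|exact H]. intro x; simpl; simpl; ring.
  - intro u. apply uniqR. have H := lin2 _ _ _ _ _ _ u (delta * ff u) hX hI.
    replace (u * (1/2) + delta * I * ff u) with (u*(1/2) + delta*ff u*I) by ring.
    eapply iextR; [|exact H]. intro x. simpl. unfold Cfam, ff; ring.
Qed.

Lemma hUmF : is_RInt (fun u => (1 - u) * ff u) 0 1 (I/2).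
Proof. have H := lin2 _ _ _ _ _ _ 1 (-1) hI hUF.
  replace (I/2) with (1*I + -1*(I/2)) by field.
  eapply iextR; [|exact H]. intro x; simpl; simpl; ring. Qed.

Lemma hUmU : is_RInt (fun u => u - u * u) 0 1 (1/6).
Proof. have H := lin2 _ _ _ _ _ _ 1 (-1) hX hX2.
  replace (1/6) with (1*(1/2) + -1*(1/3)) by field.
  eapply iextR; [|exact H]. intro x; simpl; simpl; ring. Qed.

Lemma int2B : int2 (fun u v => (1 - u) * Cfam alpha delta u v) = 1/12 + delta*I*I/2.
Proof.
  unfold int2. rewrite (extR _ (fun u => (1/2) * (u - u*u) + (delta * I) * ((1-u) * ff u))).
  - apply uniqR. have H := lin2 _ _ _ _ _ _ (1/2) (delta * I) hUmU hUmF.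
    replace (1/12 + delta*I*I/2) with (1/2*(1/6) + delta*I*(I/2)) by field.
    eapply iextR; [|exact H]. intro x; simpl; simpl; ring.
  - intro u. apply uniqR. have H := lin2 _ _ _ _ _ _ ((1-u)*u) ((1-u)*delta * ff u) hX hI.
    replace (1/2 * (u - u*u) + delta * I * ((1-u) * ff u)) with ((1-u)*u*(1/2) + (1-u)*delta*ff u*I) by ring.
    eapply iextR; [|exact H]. intro x; simpl; unfold Cfam, ff; ring.
Qed.

Lemma lin4 (g1 g2 g3 g4 : R->R) a b I1 I2 I3 I4 c1 c2 c3 c4 :
  is_RInt g1 a b I1 -> is_RInt g2 a b I2 -> is_RInt g3 a b I3 -> is_RInt g4 a b I4 ->
  is_RInt (fun x => c1 * g1 x + c2 * g2 x + (c3 * g3 x + c4 * g4 x)) a b (c1*I1 + c2*I2 + (c3*I3 + c4*I4)).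
Proof. intros H1 H2 H3 H4.
  have A := lin2 _ _ _ _ _ _ c1 c2 H1 H2. have B := lin2 _ _ _ _ _ _ c3 c4 H3 H4.
  have C := lin2 _ _ _ _ _ _ 1 1 A B.
  replace (c1*I1 + c2*I2 + (c3*I3 + c4*I4)) with (1*(c1*I1 + c2*I2) + 1*(c3*I3 + c4*I4)) by ring.
  eapply is_RInt_ext; [|exact C]. intros; simpl; ring. Qed.

Lemma int2K : int2 (fun u v => Cfam alpha delta u v * cdens (Cfam alpha delta) u v) = 1/4 + 2*delta*I*I.
Proof.
  unfold int2. rewrite (extR _ (fun u => (1/2) * u + (-delta*I) * (u * ffd u) + ((delta*I) * ff u + (delta*delta*0) * (ff u * ffd u)))).
  - apply uniqR. have H := lin4 _ _ _ _ _ _ _ _ _ _ (1/2) (-delta*I) (delta*I) (delta*delta*0) hX hK hI hL.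
    replace (1/4 + 2*delta*I*I) with (1/2*(1/2) + (-delta*I)*(-I) + (delta*I*I + delta*delta*0*0)) by field.
    exact H.
  - intro u. apply uniqR.
    have H := lin4 _ _ _ _ _ _ _ _ _ _ u (delta*u*ffd u) (delta*ff u) (delta*delta*ff u*ffd u) hX hK hI hL.
    replace (1/2 * u + (-delta*I) * (u * ffd u) + ((delta*I) * ff u + (delta*delta*0) * (ff u * ffd u)))
      with (u * (1/2) + delta*u*ffd u * (-I) + (delta*ff u * I + delta*delta*ff u*ffd u * 0)) by ring.
    eapply iextR; [|exact H]. intro x. simpl. rewrite cdensE. unfold Cfam, ff; ring.
Qed.

Lemma intD : RInt (fun u => Cfam alpha delta u u) 0 1 = 1/3 + delta*J.
Proof. apply uniqR. have H := lin2 _ _ _ _ _ _ 1 delta hX2 hJ.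
  replace (1/3 + delta*J) with (1*(1/3) + delta*J) by ring.
  eapply iextR; [|exact H]. intro x; simpl; unfold Cfam, ff; ring. Qed.

Lemma intA : RInt (fun u => Cfam alpha delta u (1 - u)) 0 1 = 1/6 + delta*J.
Proof. apply uniqR. have H := lin2 _ _ _ _ _ _ 1 delta hUmU hJ.
  replace (1/6 + delta*J) with (1*(1/6) + delta*J) by ring.
  eapply iextR; [|exact H]. intro x. simpl. unfold Cfam. fold (ff x) (ff (1-x)). rewrite ffsym. ring. Qed.

Lemma intE : RInt (fun u => u - Cfam alpha delta u u) 0 1 = 1/6 - delta*J.
Proof. apply uniqR. have H := lin2 _ _ _ _ _ _ 1 (-delta) hUmU hJ.
  replace (1/6 - delta*J) with (1*(1/6) + -delta*J) by ring.
  eapply iextR; [|exact H]. intro x; simpl; unfold Cfam, ff; ring. Qed.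
End S.

Theorem mainTheorem3 (alpha delta : R) (Halpha : alpha <> 0)
  (Hdelta : Rabs delta <= delta_star alpha) :
  blest_eta (Cfam alpha delta) = spearman_rho (Cfam alpha delta) /\
  spearman_rho (Cfam alpha delta) = 3 / 2 * kendall_tau (Cfam alpha delta) /\
  spearman_footrule (Cfam alpha delta) = 3 / 4 * gini_gamma (Cfam alpha delta).
Proof.
  unfold blest_eta, spearman_rho, kendall_tau, spearman_footrule, gini_gamma.
  rewrite int2B int2C int2K intD intA intE.
  split; [|split]; field.
Qed.
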